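(* Let $\Omega\subset\mathbb{R}^n$ be open and $f\in C^2(\Omega)\cap C(\bar\Omega)$ with $|\mathbf Hf(x)|\le1$ for all $x\in\Omega$, where $\mathbf Hf$ is the Hessian matrix and $|\cdot|$ its operator norm. Then for all $\sigma,\eta>0$, $$\{x\in\Omega:|f(x)|\le\sigma\eta\}\subset\{x\in\Omega:|\nabla f(x)|\le\sigma+\eta\}\cup N_\sigma\Big(\partial\Omega\cup\big(\{f=0\}\cap\{|\nabla f|>\eta\}\big)\Big).$$
   Context: $N_\sigma(E)$ denotes the (open) $\sigma$-neighborhood of a set $E$; the sets $\{f=0\}$ and $\{|\nabla f|>\eta\}$ are subsets of $\Omega$. *)

(* Defs.v *)
From mathcomp Require Import all_boot.
From Stdlib Require Import Reals.
Set Implicit Arguments.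
Unset Strict Implicit.

Local Open Scope R_scope.

Definition vec (n : nat) := 'I_n -> R.

Definition vsum (n : nat) (F : 'I_n -> R) : R := \big[Rplus/0]_(i < n) F i.

Definition vadd n (x y : vec n) : vec n := fun i => x i + y i.
Definition vsub n (x y : vec n) : vec n := fun i => x i - y i.
Definition dot n (x y : vec n) : R := vsum (fun i => x i * y i).
Definition vnorm n (x : vec n) : R := sqrt (dot x x).
Definition vdist n (x y : vec n) : R := vnorm (vsub x y).

Definition mat (n : nat) := 'I_n -> 'I_n -> R.
Definition mulmv n (A : mat n) (v : vec n) : vec n :=
  fun i => vsum (fun j => A i j * v j).
(* |A| <= c for the operator norm induced by the Euclidean norm
   (unfolding of  sup_{v<>0} |Av|/|v| <= c). *)
Definition opnorm_le n (A : mat n) (c : R) : Prop :=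
  forall v : vec n, vnorm (mulmv A v) <= c * vnorm v.

Definition is_open n (O : vec n -> Prop) : Prop :=
  forall x, O x -> exists r, 0 < r /\ forall y, vdist x y < r -> O y.
Definition vclosure n (E : vec n -> Prop) : vec n -> Prop :=
  fun x => forall r, 0 < r -> exists y, E y /\ vdist x y < r.
Definition vboundary n (E : vec n -> Prop) : vec n -> Prop :=
  fun x => vclosure E x /\ vclosure (fun y => ~ E y) x.
Definition nbhd n (s : R) (E : vec n -> Prop) : vec n -> Prop :=
  fun x => exists y, E y /\ vdist x y < s.

Definition has_grad n (f : vec n -> R) (x g : vec n) : Prop :=
  forall eps, 0 < eps -> exists delta, 0 < delta /\
    forall h : vec n, vnorm h < delta ->
      Rabs (f (vadd x h) - f x - dot g h) <= eps * vnorm h.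

Definition has_jac n (F : vec n -> vec n) (x : vec n) (A : mat n) : Prop :=
  forall eps, 0 < eps -> exists delta, 0 < delta /\
    forall h : vec n, vnorm h < delta ->
      vnorm (vsub (vsub (F (vadd x h)) (F x)) (mulmv A h)) <= eps * vnorm h.

Definition cont_on n (E : vec n -> Prop) (g : vec n -> R) : Prop :=
  forall x, E x -> forall eps, 0 < eps -> exists delta, 0 < delta /\
    forall y, E y -> vdist x y < delta -> Rabs (g y - g x) < eps.

Definition is_C2 n (O : vec n -> Prop) (f : vec n -> R)
  (gradf : vec n -> vec n) (hessf : vec n -> mat n) : Prop :=
  (forall x, O x -> has_grad f x (gradf x)) /\
  (forall x, O x -> has_jac gradf x (hessf x)) /\
  (forall i j : 'I_n, cont_on O (fun x => hessf x i j)).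

(* Main.v *)
Require Import Defs.
From HB Require Import structures.
From mathcomp Require Import all_boot.
From Stdlib Require Import Reals Lra FunctionalExtensionality Classical.
From Coquelicot Require Import Coquelicot.
Local Open Scope R_scope.
Set Implicit Arguments.
Unset Strict Implicit.

Lemma Rplus_assoc' : associative Rplus. Proof. move=> a b c; ring. Qed.
Lemma Rplus_comm' : commutative Rplus. Proof. move=> a b; ring. Qed.
Lemma Rplus_0_l' : left_id 0 Rplus. Proof. move=> a; ring. Qed.
HB.instance Definition _ := Monoid.isComLaw.Build R 0 Rplus Rplus_assoc' Rplus_comm' Rplus_0_l'.

Lemma vsum_add n (F G : 'I_n -> R) : vsum (fun i => F i + G i) = vsum F + vsum G.
Proof. by rewrite /vsum big_split. Qed.

Lemma vsum_scal n c (F : 'I_n -> R) : vsum (fun i => c * F i) = c * vsum F.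
Proof.
rewrite /vsum; elim: n F => [|n IH] F; first by rewrite !big_ord0 Rmult_0_r.
rewrite !big_ord_recr /= IH Rmult_plus_distr_l; reflexivity.
Qed.

Lemma vsum_ge0 n (F : 'I_n -> R) : (forall i, 0 <= F i) -> 0 <= vsum F.
Proof.
rewrite /vsum; elim: n F => [|n IH] F H; first by rewrite big_ord0; lra.
rewrite big_ord_recr /=; apply Rplus_le_le_0_compat; [apply IH => i|]; apply H.
Qed.

Lemma vsum_ext n (F G : 'I_n -> R) : (forall i, F i = G i) -> vsum F = vsum G.
Proof. by move=> H; rewrite /vsum; apply: eq_bigr => i _; apply H. Qed.

Lemma vsum_0 n : vsum (fun _ : 'I_n => 0) = 0.
Proof. by rewrite /vsum big1. Qed.

Definition scale {n} (a : R) (v : vec n) : vec n := fun i => a * v i.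

Lemma dot_ge0 n (v : vec n) : 0 <= dot v v.
Proof. apply vsum_ge0 => i; apply Rle_0_sqr. Qed.

Lemma dot_sym n (a b : vec n) : dot a b = dot b a.
Proof. apply vsum_ext => i; ring. Qed.

Lemma dot_scal_r n (c : R) (a b : vec n) : dot a (scale c b) = c * dot a b.
Proof. rewrite /dot -vsum_scal; apply vsum_ext => i; rewrite /scale; ring. Qed.

Lemma dot_scal_l n (c : R) (a b : vec n) : dot (scale c a) b = c * dot a b.
Proof. rewrite /dot -vsum_scal; apply vsum_ext => i; rewrite /scale; ring. Qed.

Lemma dot_sub_l n (a b c : vec n) : dot (vsub a b) c = dot a c - dot b c.
Proof.
have -> : dot b c = - ((-1) * dot b c) by ring.
rewrite /dot /Rminus Ropp_involutive -(vsum_scal (-1)) -vsum_add; apply vsum_ext => i; rewrite /vsub; ring.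
Qed.

Lemma vnorm_ge0 n (v : vec n) : 0 <= vnorm v.
Proof. apply sqrt_pos. Qed.

Lemma vnorm_sq n (v : vec n) : vnorm v * vnorm v = dot v v.
Proof. apply sqrt_sqrt, dot_ge0. Qed.

Lemma vnorm_scale n (c : R) (v : vec n) : vnorm (scale c v) = Rabs c * vnorm v.
Proof.
rewrite /vnorm dot_scal_l dot_scal_r -Rmult_assoc sqrt_mult_alt.
- by rewrite -sqrt_Rsqr_abs.
- apply Rle_0_sqr.
Qed.

Lemma CS n (a b : vec n) : Rabs (dot a b) <= vnorm a * vnorm b.
Proof.
have Hq : forall l, 0 <= dot a a - 2 * l * dot a b + l * l * dot b b.
  move=> l; have := dot_ge0 (vsub a (scale l b)).
  have -> : dot (vsub a (scale l b)) (vsub a (scale l b)) =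
     dot a a - 2 * l * dot a b + l * l * dot b b.
    rewrite !dot_sub_l !(dot_sym (scale l b)) !dot_sub_l !dot_scal_l (dot_sym a (vsub _ _)) dot_sub_l dot_scal_l (dot_sym b a) !dot_scal_r; ring.
  done.
have Ha := dot_ge0 a; have Hb := dot_ge0 b.
apply Rsqr_incr_0_var; last first.
  apply Rmult_le_pos; apply vnorm_ge0.
rewrite -Rsqr_abs Rsqr_mult /Rsqr !vnorm_sq.
case: (Req_dec (dot b b) 0) => Hb0.
  have : dot a b = 0.
    case: (Req_dec (dot a b) 0) => // Hab.
    have := Hq ((dot a a + 1) / (2 * dot a b)). rewrite Hb0.
    have -> : dot a a - 2 * ((dot a a + 1) / (2 * dot a b)) * dot a b = - 1 by field.
    lra.
  move=> ->; rewrite Hb0; lra.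
have := Hq (dot a b / dot b b).
have -> : dot a a - 2 * (dot a b / dot b b) * dot a b + dot a b / dot b b * (dot a b / dot b b) * dot b b
  = (dot a a * dot b b - dot a b * dot a b) / dot b b by field.
move=> H.
have Hbp : 0 < dot b b by lra.
have := Rmult_le_pos _ _ H (Rlt_le _ _ Hbp).
have -> : (dot a a * dot b b - dot a b * dot a b) / dot b b * dot b b = dot a a * dot b b - dot a b * dot a b by field.
lra.
Qed.

Lemma deriv_of_bound (F : R -> R) c l :
  (forall eps, 0 < eps -> exists delta, 0 < delta /\
     forall h, Rabs h < delta -> Rabs (F (c + h) - F c - h * l) <= eps * Rabs h) ->
  derivable_pt_lim F c l.
Proof.
move=> H eps Heps.
have [d [Hd Hb]] := H (eps / 2) ltac:(lra).
exists (mkposreal d Hd) => h Hh0 Hh /=.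
have Hah : 0 < Rabs h by apply Rabs_pos_lt.
have -> : (F (c + h) - F c) / h - l = (F (c + h) - F c - h * l) / h by field.
rewrite Rabs_div //.
apply (Rmult_lt_reg_r (Rabs h)) => //.
rewrite /Rdiv Rmult_assoc Rinv_l; last lra.
have := Hb h Hh; nra.
Qed.

Lemma cont_of_deriv (F : R -> R) c l : derivable_pt_lim F c l ->
  forall eps, 0 < eps -> exists delta, 0 < delta /\
    forall y, Rabs (y - c) < delta -> Rabs (F y - F c) < eps.
Proof.
move=> H.
have Hc : continuity_pt F c by apply derivable_continuous_pt; exists l.
move=> eps Heps; have [a [Ha Hb]] := Hc eps Heps.
exists a; split => // y Hy.
case: (Req_dec y c) => [->|Hyc]; first by rewrite Rminus_eq_0 Rabs_R0.
apply (Hb y); split => //; split => //; auto.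
Qed.

Lemma lub_approx (E : R -> Prop) T t : is_lub E T -> t < T -> exists e, E e /\ t < e.
Proof.
move=> [Hub Hl] Ht.
apply NNPP => Hn.
have : T <= t.
  apply Hl => e He. apply Rnot_lt_le => Hlt. apply Hn; by exists e.
lra.
Qed.

Definition pth n (x u : vec n) (t : R) : vec n := vadd x (scale t u).

Lemma pth_add n (x u : vec n) c h : vadd (pth x u c) (scale h u) = pth x u (c + h).
Proof. apply functional_extensionality => i; rewrite /pth /vadd /scale; ring. Qed.

Lemma pth_dist n (x u : vec n) a b : vnorm u = 1 -> vdist (pth x u a) (pth x u b) = Rabs (a - b).
Proof.
move=> Hu; rewrite /vdist.
have -> : vsub (pth x u a) (pth x u b) = scale (a - b) u.
  apply functional_extensionality => i; rewrite /pth /vsub /vadd /scale; ring.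
by rewrite vnorm_scale Hu Rmult_1_r.
Qed.

Lemma pth0 n (x u : vec n) : pth x u 0 = x.
Proof. apply functional_extensionality => i; rewrite /pth /vadd /scale; ring. Qed.

Lemma deriv_f n (f : vec n -> R) (x u G : vec n) c :
  vnorm u = 1 -> has_grad f (pth x u c) G ->
  derivable_pt_lim (fun t => f (pth x u t)) c (dot G u).
Proof.
move=> Hu Hg; apply deriv_of_bound => eps Heps.
have [d [Hd Hb]] := Hg eps Heps.
exists d; split => // h Hh.
have := Hb (scale h u); rewrite vnorm_scale Hu Rmult_1_r pth_add dot_scal_r => H.
by apply H.
Qed.

Lemma mulmv_scale n (H : mat n) c (v : vec n) : mulmv H (scale c v) = scale c (mulmv H v).
Proof.
apply functional_extensionality => i; rewrite /mulmv /scale -vsum_scal.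
apply vsum_ext => j; ring.
Qed.

Lemma deriv_g n (gr : vec n -> vec n) (x u : vec n) (H : mat n) c :
  vnorm u = 1 -> has_jac gr (pth x u c) H ->
  derivable_pt_lim (fun t => dot (gr (pth x u t)) u) c (dot (mulmv H u) u).
Proof.
move=> Hu Hg; apply deriv_of_bound => eps Heps.
have [d [Hd Hb]] := Hg eps Heps.
exists d; split => // h Hh.
have := Hb (scale h u); rewrite vnorm_scale Hu Rmult_1_r pth_add mulmv_scale => Hle.
apply Rle_trans with (2 := Hle Hh).
rewrite -(dot_scal_l h) -!dot_sub_l.
apply Rle_trans with (1 := CS _ _); rewrite Hu Rmult_1_r; lra.
Qed.

Theorem mainTheorem6 (n : nat) (Omega : vec n -> Prop) (f : vec n -> R)
  (gradf : vec n -> vec n) (hessf : vec n -> mat n) :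
  is_open Omega ->
  is_C2 Omega f gradf hessf ->
  cont_on (vclosure Omega) f ->
  (forall x, Omega x -> opnorm_le (hessf x) 1) ->
  forall sigma eta : R, 0 < sigma -> 0 < eta ->
  forall x, Omega x -> Rabs (f x) <= sigma * eta ->
    vnorm (gradf x) <= sigma + eta \/
    nbhd sigma (fun y => vboundary Omega y \/
                         (Omega y /\ f y = 0 /\ eta < vnorm (gradf y))) x.
Proof.
move=> Hopen [Hgr [Hjac _]] _ Hop sigma eta Hs He x Hx Hfx.
case: (Rle_lt_dec (vnorm (gradf x)) (sigma + eta)) => HN; [by left | right].
set N := vnorm (gradf x) in HN.
have dxx : forall y : vec n, vdist y y = 0.
  move=> y; rewrite /vdist /vnorm /dot.
  rewrite (vsum_ext (G := fun _ => 0)) ?vsum_0 ?sqrt_0 // => i; rewrite /vsub; ring.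
case: (Req_dec (f x) 0) => Hf0.
  exists x; split; last by rewrite dxx; lra.
  right; split; first done. split; first done. rewrite -/N; lra.
have [s [Hss [Hsabs Hsf]]] : exists s, s * s = 1 /\ Rabs s = 1 /\ s * f x = Rabs (f x).
  case: (Rle_lt_dec 0 (f x)) => Hp.
    exists 1; rewrite Rabs_R1 Rabs_right; [|lra]; split; [ring|split; [done|ring]].
  exists (-1); rewrite Rabs_Ropp Rabs_R1 Rabs_left //; split; [ring|split; [done|ring]].
have HNp : 0 < N by lra.
pose u := scale (- s / N) (gradf x).
have Hu : vnorm u = 1.
  rewrite /u vnorm_scale -/N Rabs_div; last lra.
  rewrite Rabs_Ropp Hsabs (Rabs_right N); [field|]; lra.
have Hgu : dot (gradf x) u = - s * N.
  rewrite /u dot_scal_r -vnorm_sq -/N; field; lra.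
pose p := pth x u.
pose phi t := s * f (p t).
pose psi t := s * dot (gradf (p t)) u.
pose d2 t := s * dot (mulmv (hessf (p t)) u) u.
have Dphi : forall c, Omega (p c) -> derivable_pt_lim phi c (psi c).
  move=> c Hc; apply derivable_pt_lim_scal; apply deriv_f => //; by apply Hgr.
have Dpsi : forall c, Omega (p c) -> derivable_pt_lim psi c (d2 c).
  move=> c Hc; apply derivable_pt_lim_scal; apply deriv_g => //; by apply Hjac.
have Bd2 : forall c, Omega (p c) -> Rabs (d2 c) <= 1.
  move=> c Hc; rewrite /d2 Rabs_mult Hsabs Rmult_1_l.
  apply Rle_trans with (1 := CS _ _); rewrite Hu Rmult_1_r.
  have := Hop _ Hc u; rewrite Hu; lra.
have phi0 : phi 0 = Rabs (f x) by rewrite /phi /p pth0.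
have psi0 : psi 0 = - N.
  rewrite /psi /p pth0 Hgu; have : s * (- s * N) = - (s * s) * N by ring.
  rewrite Hss; lra.
have Bnd : forall t, 0 <= t -> (forall y, 0 <= y <= t -> Omega (p y)) ->
    psi t <= - N + t /\ phi t <= Rabs (f x) + (- N + t) * t.
  have Bpsi : forall t, 0 <= t -> (forall y, 0 <= y <= t -> Omega (p y)) -> psi t <= - N + t.
    move=> t Ht Hall.
    have H1 : forall y, Rmin 0 t < y < Rmax 0 t -> is_derive psi y (d2 y).
      move=> y; rewrite Rmin_left // Rmax_right // => Hy; apply is_derive_Reals, Dpsi, Hall; lra.
    have H2 : forall y, Rmin 0 t <= y <= Rmax 0 t -> continuity_pt psi y.
      move=> y; rewrite Rmin_left // Rmax_right // => Hy.
      apply derivable_continuous_pt; exists (d2 y); apply Dpsi, Hall; lra.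
    have [c [Hc Heq]] := MVT_gen psi 0 t d2 H1 H2.
    move: Hc; rewrite Rmin_left // Rmax_right // => Hc.
    have := Bd2 c (Hall c Hc). move/Rabs_le_between => Hb.
    have : psi t = psi 0 + d2 c * t by rewrite Rminus_0_r in Heq; rewrite -Heq; ring.
    rewrite psi0; nra.
  move=> t Ht Hall; split; first exact: Bpsi.
  have H1 : forall y, Rmin 0 t < y < Rmax 0 t -> is_derive phi y (psi y).
    move=> y; rewrite Rmin_left // Rmax_right // => Hy; apply is_derive_Reals, Dphi, Hall; lra.
  have H2 : forall y, Rmin 0 t <= y <= Rmax 0 t -> continuity_pt phi y.
    move=> y; rewrite Rmin_left // Rmax_right // => Hy.
    apply derivable_continuous_pt; exists (psi y); apply Dphi, Hall; lra.
  have [c [Hc Heq]] := MVT_gen phi 0 t psi H1 H2.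
  move: Hc; rewrite Rmin_left // Rmax_right // => Hc.
  have Hb : psi c <= - N + c.
    apply Bpsi; first lra. move=> y Hy; apply Hall; lra.
  have : phi t = phi 0 + psi c * t by rewrite Rminus_0_r in Heq; rewrite -Heq; ring.
  rewrite phi0; nra.
pose E t := 0 <= t <= sigma /\ (forall y, 0 <= y <= t -> Omega (p y) /\ 0 < phi y).
have E0 : E 0.
  split; first lra. move=> y Hy; have -> : y = 0 by lra.
  rewrite /p pth0 phi0; split => //; by apply Rabs_pos_lt.
have [T HT] := completeness E (ex_intro _ sigma (fun t Ht => proj2 (proj1 Ht))) (ex_intro _ 0 E0).
have T0 : 0 <= T by apply (proj1 HT).
have Tsig : T <= sigma by apply (proj2 HT) => t Ht; apply Ht.
have Tlt : T < sigma.
  have Hub : forall t, E t -> t <= sigma * eta / (N - sigma).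
    move=> t [Ht Hall].
    have [_ Hb] := Bnd t (proj1 Ht) (fun y Hy => proj1 (Hall y Hy)).
    have Hp := proj2 (Hall t (conj (proj1 Ht) (Rle_refl t))).
    have : (N - sigma) * t < sigma * eta by nra.
    move=> Hlt; apply Rlt_le.
    apply (Rmult_lt_reg_l (N - sigma)); first lra.
    have -> : (N - sigma) * (sigma * eta / (N - sigma)) = sigma * eta by field; lra.
    done.
  have : T <= sigma * eta / (N - sigma) by apply (proj2 HT).
  move=> HT'.
  have : sigma * eta / (N - sigma) < sigma.
    apply (Rmult_lt_reg_l (N - sigma)); first lra.
    have -> : (N - sigma) * (sigma * eta / (N - sigma)) = sigma * eta by field; lra.
    nra.
  lra.
have S1 : forall t, 0 <= t < T -> Omega (p t) /\ 0 < phi t.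
  move=> t Ht; have [e [[Hea Hall2] Hte]] := lub_approx HT (proj2 Ht).
  apply Hall2; lra.
have HxT : vdist x (p T) < sigma.
  rewrite -{1}(pth0 x u) /p pth_dist // Rabs_left1; lra.
case: (classic (Omega (p T))) => HOT; last first.
  exists (p T); split => //; left; split.
  - move=> r Hr.
    have [e [[Hea Hall2] Hte]] := lub_approx HT (ltac:(lra) : T - r / 2 < T).
    have HeT : e <= T by apply (proj1 HT).
    exists (p e); split; first by apply (Hall2 e); lra.
    rewrite /p pth_dist // Rabs_right; lra.
  - move=> r Hr; exists (p T); split => //; rewrite dxx; lra.
have Hall : forall y, 0 <= y <= T -> Omega (p y).
  move=> y Hy; case: (Req_dec y T) => [->|Hne] //; apply S1; lra.
have [cphi] : exists c, c = phi T by eexists.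
case: (Rlt_le_dec 0 (phi T)) => HpT _.
  exfalso.
  have [r [Hr Hball]] := Hopen _ HOT.
  have [d [Hd Hc]] := cont_of_deriv (Dphi T HOT) HpT.
  pose T' := T + Rmin (Rmin r d) (sigma - T) / 2.
  have Hm1 : 0 < Rmin (Rmin r d) (sigma - T) by repeat apply Rmin_pos; lra.
  have Hm2 : Rmin (Rmin r d) (sigma - T) <= Rmin r d by apply Rmin_l.
  have Hm3 : Rmin (Rmin r d) (sigma - T) <= sigma - T by apply Rmin_r.
  have Hm4 : Rmin r d <= r by apply Rmin_l.
  have Hm5 : Rmin r d <= d by apply Rmin_r.
  have : E T'.
    rewrite /T'; split; first lra.
    move=> y Hy; case: (Rlt_le_dec y T) => HyT; first by apply S1; lra.
    split.
    - apply Hball; rewrite /p pth_dist // Rabs_left1; lra.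
    - have := Hc y ltac:(rewrite Rabs_right; lra).
      move/Rabs_lt_between; lra.
  move=> HE; have := proj1 HT _ HE; rewrite /T'; lra.
have phiT0 : phi T = 0.
  apply Rle_antisym => //; apply Rnot_lt_le => Hneg.
  have [d [Hd Hc]] := cont_of_deriv (Dphi T HOT) (ltac:(lra) : 0 < - phi T).
  have [e [[Hea Hall2] Hte]] := lub_approx HT (ltac:(lra) : T - d / 2 < T).
  have HeT : e <= T by apply (proj1 HT).
  have := proj2 (Hall2 e ltac:(lra)).
  have := Hc e ltac:(rewrite Rabs_left1; lra).
  move/Rabs_lt_between; lra.
exists (p T); split => //; right; split => //; split.
  have : s * f (p T) = 0 by [].
  move/Rmult_integral => [Hs0|] //; rewrite Hs0 Rabs_R0 in Hsabs; lra.
have [Hb _] := Bnd T T0 Hall.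
have : Rabs (psi T) <= vnorm (gradf (p T)).
  rewrite /psi Rabs_mult Hsabs Rmult_1_l.
  apply Rle_trans with (1 := CS _ _); rewrite Hu; lra.
move=> Hle.
have : N - T <= Rabs (psi T) by rewrite Rabs_left1; lra.
lra.
Qed.
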